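(* Let $n$ be a positive integer. (a) If $\lambda^{3n/2}>(1+\sqrt2)C_1$, then $c_n>0$. (b) If $\lambda^{3n/2}>\frac{(1+\sqrt2)C_1}{\sqrt\lambda(\sqrt\lambda-1)}$, then $c_{n+1}>c_n$.
   Context: Standing setup: $p,q\in\mathbb{Z}$ are such that $x^3-px-q$ is irreducible over $\mathbb{Q}$ with exactly one real root $\theta$ (one has $3\theta^2-4p>0$ and $3\theta^2-p>0$). $K=\mathbb{Q}(\theta)\subset\mathbb{R}$, $\mathcal{O}_K$ its ring of integers. $d$ is a positive integer with $\mathcal{O}_K\subseteq\frac1d\mathbb{Z}[\theta]$. $\lambda\in\mathcal{O}_K$ is a unit with $\lambda>1$. For $n\ge1$ the rationals $a_n,b_n,c_n$ are defined by $a_n+b_n\theta+c_n\theta^2=\lambda^n$, and $X_n=a_n+pc_n-b_n\theta$, $Y_n=a_n+pc_n-c_n\theta^2$, $Z_n=b_n\theta-c_n\theta^2$, $k_n=dc_n$. Constants: $C_1=\max\{\sqrt2,\ \frac{\sqrt2|\theta|}{\sqrt{3\theta^2-4p}}\}$, $C_2=\frac{\sqrt d}{\sqrt{3\theta^2-p}}$. *)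

(* Defs.v *)
From HB Require Import structures.
From mathcomp Require Import all_boot all_order all_algebra.
From Stdlib Require Import ZArith.

Set Implicit Arguments. Unset Strict Implicit. Unset Printing Implicit Defensive.

Definition Z_to_int (z : Z) : int :=
  match z with
  | Z0 => Posz 0
  | Zpos n => Posz (Pos.to_nat n)
  | Zneg n => (- Posz (Pos.to_nat n))%R
  end.

Definition cubic_poly (p q : Z) : {poly rat} :=
  ('X^3 - ((Z_to_int p)%:~R : rat) *: 'X - ((Z_to_int q)%:~R : rat)%:P)%R.

Definition cubic_irreducible (p q : Z) : Prop := irreducible_poly (cubic_poly p q).

From Stdlib Require Import Reals QArith Qreals List.
Local Open Scope R_scope.

Definition evalZ (l : list Z) (x : R) : R :=
  fold_right (fun c acc => IZR c + x * acc) 0 l.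

(* x is an algebraic integer: root of a monic polynomial with integer
   coefficients, namely X^(length l) + sum_i l_i X^i *)
Definition alg_int (x : R) : Prop :=
  exists l : list Z, x ^ length l + evalZ l x = 0.

(* x belongs to K = Q(theta) (theta of degree 3: K = Q + Q theta + Q theta^2) *)
Definition in_K (theta x : R) : Prop :=
  exists a b c : Q, x = Q2R a + Q2R b * theta + Q2R c * theta ^ 2.

Definition in_OK (theta x : R) : Prop := in_K theta x /\ alg_int x.

Definition unit_OK (theta x : R) : Prop := in_OK theta x /\ in_OK theta (/ x).

Definition C1_const (p : Z) (theta : R) : R :=
  Rmax (sqrt 2) (sqrt 2 * Rabs theta / sqrt (3 * theta ^ 2 - 4 * IZR p)).

(* Main.v *)
Set Warnings "-notation-overridden,-ambiguous-paths,-deprecated".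
Require Import Defs.
From Stdlib Require Import Reals QArith Qreals ZArith List.

Module MC.
From HB Require Import structures.
From mathcomp Require Import all_boot all_order all_algebra.
From mathcomp Require Import ssrZ.
From Stdlib Require Import ZArith Lia.
From mathcomp Require Import ring.
Import Order.TTheory GRing.Theory Num.Theory.

Lemma Z_to_intE z : Z_to_int z = int_of_Z z.
Proof.
case: z => //= k. have := Pos2Nat.is_pos k.
case: (Pos.to_nat k) => [|m] H; first lia. by rewrite NegzE.
Qed.

Local Open Scope ring_scope.

Lemma size_cubic (P Q : rat) : size ('X^3 - P *: 'X - Q%:P : {poly rat}) = 4%N.
Proof.
rewrite -addrA size_polyDl ?size_polyXn //.
apply: (leq_ltn_trans (size_polyD _ _)).
rewrite size_opp size_opp gtn_max; apply/andP; split.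
  by apply: (leq_ltn_trans (size_scale_leq _ _)); rewrite size_polyX.
by apply: (leq_ltn_trans (size_polyC_leq1 _)).
Qed.

Lemma aux_field (N P Q E : rat) : E != 0 ->
  (N/E*(N/E)*(N/E) - P*N/E - Q)*E^+3 = N*N*N - P*N*E*E - Q*E*E*E.
Proof. move=> HE; field. done. Qed.

Lemma no_rat_root_mc (p q : Z) : Defs.cubic_irreducible p q ->
  forall n e : Z, e <> 0%Z -> (n*n*n - p*n*e*e - q*e*e*e)%Z <> 0%Z.
Proof.
move=> [_ Hirr] n e He H.
set x : rat := (int_of_Z n)%:~R / (int_of_Z e)%:~R.
have Ee : (int_of_Z e)%:~R != 0 :> rat.
  rewrite intr_eq0; apply/eqP=> E0; apply: He.
  by rewrite -(int_of_ZK e) E0.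
have Hz : int_of_Z (n*n*n - p*n*e*e - q*e*e*e)%Z = 0.
  by rewrite H.
rewrite !rmorphB !rmorphM /= in Hz.
have Hr : root (cubic_poly p q) x.
  rewrite /root /cubic_poly !hornerE !Z_to_intE.
  have -> : x ^+ 3 = x * x * x by rewrite !exprS expr0 mulr1 mulrA.
  apply/eqP.
  have : ((int_of_Z n)%:~R * (int_of_Z n)%:~R * (int_of_Z n)%:~R
         - (int_of_Z p)%:~R * (int_of_Z n)%:~R * (int_of_Z e)%:~R * (int_of_Z e)%:~R
         - (int_of_Z q)%:~R * (int_of_Z e)%:~R * (int_of_Z e)%:~R * (int_of_Z e)%:~R : rat) = 0.
    by rewrite -!intrM -!intrB Hz.
  rewrite /x => Hq.
  apply: (mulIf (expf_neq0 3 Ee)). rewrite mul0r.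
  rewrite -Hq. exact: aux_field.
have := Hirr ('X - x%:P). rewrite size_XsubC => /(_ isT).
move/(_ (etrans (dvdp_XsubCl _ _) Hr)) => /eqp_size.
by rewrite size_XsubC /cubic_poly size_cubic.
Qed.

End MC.

From Stdlib Require Import Reals QArith Qreals ZArith List Lra Lia Psatz.
Open Scope R_scope.


Definition isQ (x : R) : Prop := exists r : Q, x = Q2R r.

Lemma isQ_IZR z : isQ (IZR z).
Proof. exists (inject_Z z). unfold Q2R; simpl. field. Qed.
Lemma isQ_add x y : isQ x -> isQ y -> isQ (x + y).
Proof. intros [r ->] [s ->]. exists (r + s)%Q. now rewrite Q2R_plus. Qed.
Lemma isQ_mul x y : isQ x -> isQ y -> isQ (x * y).
Proof. intros [r ->] [s ->]. exists (r * s)%Q. now rewrite Q2R_mult. Qed.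
Lemma isQ_opp x : isQ x -> isQ (- x).
Proof. intros [r ->]. exists (- r)%Q. now rewrite Q2R_opp. Qed.
Lemma isQ_sub x y : isQ x -> isQ y -> isQ (x - y).
Proof. intros. unfold Rminus. apply isQ_add; auto. now apply isQ_opp. Qed.
Lemma isQ_inv x : isQ x -> isQ (/ x).
Proof.
intros [r ->]. destruct (Qeq_dec r 0) as [E|E].
- exists 0%Q. rewrite E. unfold Q2R; simpl. rewrite Rmult_0_l, Rinv_0. lra.
- exists (/ r)%Q. now rewrite Q2R_inv.
Qed.
Lemma isQ_div x y : isQ x -> isQ y -> isQ (x / y).
Proof. intros. apply isQ_mul; auto. now apply isQ_inv. Qed.
Lemma isQ_Q2R r : isQ (Q2R r).
Proof. now exists r. Qed.
Lemma isQ_INR n : isQ (INR n).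
Proof. rewrite INR_IZR_INZ. apply isQ_IZR. Qed.

Lemma no_rat_root (p q : Z)
  (NRRZ : forall n e : Z, e <> 0%Z -> (n*n*n - p*n*e*e - q*e*e*e)%Z <> 0%Z) :
  forall x, isQ x -> x ^ 3 - IZR p * x - IZR q <> 0.
Proof.
intros x [r ->] H. destruct r as [n e]. unfold Q2R in H; simpl in H.
apply (NRRZ n (Zpos e)). lia. apply eq_IZR.
rewrite !minus_IZR, !mult_IZR.
assert (He : IZR (Zpos e) <> 0) by (apply not_0_IZR; lia).
set (E := IZR (Zpos e)) in *.
transitivity (E*E*E * ((IZR n * / E) ^ 3 - IZR p * (IZR n * / E) - IZR q)).
field; auto.
simpl. rewrite H. ring.
Qed.

Section S.
End S.

Lemma indep (p q : Z) (th : R)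
  (Hroot : th ^ 3 - IZR p * th - IZR q = 0)
  (NRR : forall x, isQ x -> x ^ 3 - IZR p * x - IZR q <> 0)
  a b c : isQ a -> isQ b -> isQ c -> a + b * th + c * th ^ 2 = 0 ->
  a = 0 /\ b = 0 /\ c = 0.
Proof.
intros Ha Hb Hc H.
assert (HthQ : ~ isQ th) by (intro Hq; exact (NRR th Hq Hroot)).
destruct (Req_dec c 0) as [Hc0|Hc0].
- subst c. destruct (Req_dec b 0) as [Hb0|Hb0].
  + subst b. split; [lra | split; reflexivity].
  + exfalso. apply HthQ. replace th with (- a / b) by (field_simplify_eq; lra).
    apply isQ_div; auto. now apply isQ_opp.
- exfalso. set (be := b / c). set (ga := a / c).
  assert (Hq2 : th ^ 2 = - be * th - ga) by (unfold be, ga; field_simplify_eq; lra).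
  assert (Hrem : (be*be - ga - IZR p) * th + (be * ga - IZR q) = 0).
  { replace ((be*be - ga - IZR p) * th + (be * ga - IZR q)) with
      (th ^ 3 - IZR p * th - IZR q - (th ^ 2 + be * th + ga) * (th - be)) by ring.
    rewrite Hroot. replace (th ^ 2 + be * th + ga) with 0 by lra. ring. }
  assert (Qbe : isQ be) by (apply isQ_div; auto).
  assert (Qga : isQ ga) by (apply isQ_div; auto).
  destruct (Req_dec (be*be - ga - IZR p) 0) as [Hk|Hk].
  + apply (NRR be Qbe).
    assert (be * ga - IZR q = 0) by (rewrite Hk in Hrem; lra).
    replace (be ^ 3 - IZR p * be - IZR q) with (be * (be*be - ga - IZR p) + (be * ga - IZR q)) by ring.
    rewrite Hk. lra.
  + apply HthQ. replace th with (- (be * ga - IZR q) / (be*be - ga - IZR p)) by (field_simplify_eq; lra).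
    apply isQ_div. apply isQ_opp. apply isQ_sub. apply isQ_mul; auto. apply isQ_IZR.
    apply isQ_sub. apply isQ_sub. apply isQ_mul; auto. auto. apply isQ_IZR.
Qed.

Lemma D_pos (p q : Z) (th : R)
  (Hroot : th ^ 3 - IZR p * th - IZR q = 0)
  (Huniq : forall x : R, x ^ 3 - IZR p * x - IZR q = 0 -> x = th)
  (NRR : forall x, isQ x -> x ^ 3 - IZR p * x - IZR q <> 0) :
  0 < 3 * th ^ 2 - 4 * IZR p.
Proof.
destruct (Rlt_dec 0 (3 * th ^ 2 - 4 * IZR p)) as [H|H]; auto. exfalso.
assert (HD : 0 <= -(3 * th ^ 2 - 4 * IZR p)) by lra.
set (s := sqrt (-(3 * th ^ 2 - 4 * IZR p))).
assert (Hs : s * s = -(3 * th ^ 2 - 4 * IZR p)) by (apply sqrt_sqrt; auto).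
assert (fact : forall x, x * x + th * x + th * th - IZR p = 0 -> x = th).
{ intros x Hx. apply Huniq.
  replace (x ^ 3 - IZR p * x - IZR q) with
    ((x - th) * (x * x + th * x + th * th - IZR p) + (th ^ 3 - IZR p * th - IZR q)) by ring.
  rewrite Hx, Hroot. ring. }
assert (h1 := fact ((- th + s) / 2) ltac:(field_simplify_eq; nra)).
assert (h2 := fact ((- th - s) / 2) ltac:(field_simplify_eq; nra)).
assert (th = 0) by lra.
apply (NRR th). rewrite H0. exists 0%Q. unfold Q2R; simpl; ring. auto.
Qed.


Definition T3 := (R * R * R)%type.
Definition ev (th : R) (t : T3) : R := let '(a,b,c) := t in a + b*th + c*th^2.
Definition tmul (P Qv : R) (t t' : T3) : T3 :=
  let '(a,b,c) := t in let '(a2,b2,c2) := t' in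
  (a*a2 + Qv*(b*c2+c*b2), a*b2+b*a2+P*(b*c2+c*b2)+Qv*c*c2, a*c2+b*b2+c*a2+P*c*c2).
Definition Qn (P th : R) (t : T3) : R := let '(a,b,c) := t in
  a*a - a*b*th + a*c*(2*P-th*th) + b*b*(th*th-P) - b*c*th*(th*th-P) + c*c*(th*th-P)^2.
Definition isQT (t : T3) : Prop := isQ (fst (fst t)) /\ isQ (snd (fst t)) /\ isQ (snd t).
Definition tsub (t t' : T3) : T3 :=
  let '(a,b,c) := t in let '(a2,b2,c2) := t' in (a - a2, b - b2, c - c2).
Definition tscal (k : R) (t : T3) : T3 := let '(a,b,c) := t in (k*a, k*b, k*c).
Definition NF (P Qv a b c : R) : R :=
  a^3 + 2*a^2*c*P - a*b^2*P - 3*a*b*c*Qv + a*c^2*P^2 + b^3*Qv - b*c^2*P*Qv + c^3*Qv^2.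

Section Alg.
Variables (P Qv th : R).
Hypothesis Hroot : th ^ 3 - P * th - Qv = 0.

Lemma ev_mul t t' : ev th (tmul P Qv t t') = ev th t * ev th t'.
Proof.
destruct t as [[a b] c]; destruct t' as [[a2 b2] c2]; simpl.
transitivity (a * a2 + a * b2 * th + a * c2 * th ^ 2 + b * th * a2 + b * th * b2 * th + b * th * c2 * th ^ 2 + c * th ^ 2 * a2 + c * th ^ 2 * b2 * th + c * th ^ 2 * c2 * th ^ 2 - (th ^ 3 - P * th - Qv) * ((b*c2+c*b2) + c*c2*th)).
ring. rewrite Hroot. ring.
Qed.

Lemma Qn_mul t t' : Qn P th (tmul P Qv t t') = Qn P th t * Qn P th t'.
Proof.
destruct t as [[a b] c]; destruct t' as [[a2 b2] c2]; unfold tmul, Qn.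
match goal with |- ?L = ?R => transitivity (R + (th ^ 3 - P * th - Qv) * ((-1)*c^2*c2^2*th^5 + (-1)*c^2*c2^2*Qv*th^2 + (3)*c^2*c2^2*P*th^3 + c^2*c2^2*P*Qv + (-2)*c^2*c2^2*P^2*th + c^2*b2*c2*th^4 + c^2*b2*c2*Qv*th + (-2)*c^2*b2*c2*P*th^2 + (-1)*c^2*b2^2*th^3 + (-1)*c^2*b2^2*Qv + (2)*c^2*b2^2*P*th + c^2*a2*c2*th^3 + (-1)*c^2*a2*c2*P*th + c^2*a2*b2*th^2 + (-2)*c^2*a2*b2*P + b*c*c2^2*th^4 + b*c*c2^2*Qv*th + (-2)*b*c*c2^2*P*th^2 + (-1)*b*c*b2*c2*th^3 + (-2)*b*c*b2*c2*Qv + (3)*b*c*b2*c2*P*th + b*c*b2^2*th^2 + (-2)*b*c*b2^2*P + (-1)*b*c*a2*c2*th^2 + b*c*a2*b2*th + (-1)*b^2*c2^2*th^3 + (-1)*b^2*c2^2*Qv + (2)*b^2*c2^2*P*th + b^2*b2*c2*th^2 + (-2)*b^2*b2*c2*P + b^2*a2*c2*th + a*c*c2^2*th^3 + (-1)*a*c*c2^2*P*th + (-1)*a*c*b2*c2*th^2 + a*c*b2^2*th + a*c*a2*c2*th + (-2)*a*c*a2*b2 + a*b*c2^2*th^2 + (-2)*a*b*c2^2*P + a*b*b2*c2*th + (-2)*a*b*a2*c2)) end.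
ring. rewrite Hroot. ring.
Qed.

Lemma Nm_int a b c : ev th (a,b,c) * Qn P th (a,b,c) = NF P Qv a b c.
Proof.
unfold ev, Qn, NF.
match goal with |- ?L = ?R => transitivity (R + (th ^ 3 - P * th - Qv) * (c^3*th^3 + c^3*Qv + (-1)*c^3*P*th + (-1)*b*c^2*P + b^3 + (-3)*a*b*c)) end.
ring. rewrite Hroot. ring.
Qed.
End Alg.

Lemma Qn_X (P th a b c : R) : Qn P th (a,b,c) =
  (a - b*th/2 + c*(P - th*th/2))^2 + (3*th^2 - 4*P)/4 * (b - c*th)^2.
Proof. unfold Qn. field. Qed.

Lemma trace_id (P th a b c : R) : 0 < 3*th^2 - 4*P -> 0 < 3*th^2 - P ->
  c * ((3*th^2 - 4*P) * (3*th^2 - P)) = ev th (a,b,c) * (3*th^2 - 4*P) +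
   2 * ((a - b*th/2 + c*(P - th*th/2)) * (2*P - 3*th^2/2) - 3*th*(b - c*th)*(3*th^2-4*P)/4).
Proof. intros. unfold ev. field. Qed.

Lemma ev_tsub th t t' : ev th (tsub t t') = ev th t - ev th t'.
Proof. destruct t as [[a b] c]; destruct t' as [[a2 b2] c2]; simpl; ring. Qed.
Lemma ev_tscal th k t : ev th (tscal k t) = k * ev th t.
Proof. destruct t as [[a b] c]; simpl; ring. Qed.
Lemma Qn_tscal P th k t : Qn P th (tscal k t) = k^2 * Qn P th t.
Proof. destruct t as [[a b] c]; simpl; ring. Qed.


Fixpoint tpow (P Qv : R) (t : T3) (n : nat) : T3 :=
  match n with O => (1,0,0) | S k => tmul P Qv t (tpow P Qv t k) end.

Definition Good (th : R) (d e : nat) (x : R) : Prop :=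
  exists u v w : Z, x = ev th (IZR u, IZR v, IZR w) / (INR d ^ e).

Lemma sq_sum_zero x y k : 0 < k -> x^2 + k*y^2 = 0 -> x = 0 /\ y = 0.
Proof.
intros Hk H. assert (h1 := pow2_ge_0 x). assert (h2 := pow2_ge_0 y).
assert (h3 : 0 <= k * y^2) by (apply Rmult_le_pos; lra).
assert (x^2 = 0) by lra. assert (y^2 = 0).
{ apply (Rmult_eq_reg_l k). lra. lra. }
split; [destruct (Rmult_integral x x) | destruct (Rmult_integral y y)]; try lra;
  (replace (_ * _) with (_ ^ 2) by ring; auto).
Qed.

Section Main.
Variables (p q : Z) (th : R).
Hypothesis Hroot : th ^ 3 - IZR p * th - IZR q = 0.
Hypothesis NRR : forall x, isQ x -> x ^ 3 - IZR p * x - IZR q <> 0.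
Hypothesis HD : 0 < 3 * th ^ 2 - 4 * IZR p.

Lemma uniqT t t' : isQT t -> isQT t' -> ev th t = ev th t' -> t = t'.
Proof.
destruct t as [[a b] c]; destruct t' as [[a2 b2] c2]; unfold isQT; simpl.
intros (Ha & Hb & Hc) (Ha2 & Hb2 & Hc2) E.
assert (Hi := indep p q th Hroot NRR (a - a2) (b - b2) (c - c2)
  ltac:(apply isQ_sub; auto) ltac:(apply isQ_sub; auto) ltac:(apply isQ_sub; auto)
  ltac:(lra)).
assert (a = a2) by lra. assert (b = b2) by lra. assert (c = c2) by lra. now subst.
Qed.

Lemma Qn_nonneg t : 0 <= Qn (IZR p) th t.
Proof. destruct t as [[a b] c]. rewrite Qn_X. apply Rplus_le_le_0_compat; [apply pow2_ge_0 | apply Rmult_le_pos; [lra | apply pow2_ge_0]]. Qed.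

Lemma Qn_pos t : isQT t -> ev th t <> 0 -> 0 < Qn (IZR p) th t.
Proof.
destruct t as [[a b] c]; unfold isQT; simpl. intros (Ha & Hb & Hc) Hne.
destruct (Qn_nonneg (a,b,c)) as [H|H]; auto. exfalso.
rewrite Qn_X in H. set (D4 := (3*th^2 - 4*IZR p)/4) in *.
assert (0 < D4) by (unfold D4; lra).
destruct (sq_sum_zero _ _ _ H0 (eq_sym H)) as [HX HW].
destruct (Req_dec c 0) as [Hc0|Hc0].
- subst c. assert (b = 0) by lra. subst b. apply Hne. lra.
- apply (NRR th). replace th with (b / c) by (field_simplify_eq; lra). apply isQ_div; auto.
  exact Hroot.
Qed.

Lemma isQT_tmul t t' : isQT t -> isQT t' -> isQT (tmul (IZR p) (IZR q) t t').
Proof.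
destruct t as [[a b] c]; destruct t' as [[a2 b2] c2]; unfold isQT; simpl.
intros (Ha & Hb & Hc) (Ha2 & Hb2 & Hc2).
assert (QP := isQ_IZR p). assert (QQ := isQ_IZR q).
repeat split; repeat (apply isQ_add || apply isQ_mul); auto.
Qed.

Lemma isQT_tsub t t' : isQT t -> isQT t' -> isQT (tsub t t').
Proof.
destruct t as [[a b] c]; destruct t' as [[a2 b2] c2]; unfold isQT; simpl.
intros (Ha & Hb & Hc) (Ha2 & Hb2 & Hc2). repeat split; apply isQ_sub; auto.
Qed.

Lemma isQT_tscal k t : isQ k -> isQT t -> isQT (tscal k t).
Proof.
destruct t as [[a b] c]; unfold isQT; simpl.
intros Hk (Ha & Hb & Hc). repeat split; apply isQ_mul; auto.
Qed.

Lemma isQT_tpow t n : isQT t -> isQT (tpow (IZR p) (IZR q) t n).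
Proof.
intro H. induction n; simpl.
- unfold isQT; simpl. repeat split; [apply (isQ_IZR 1)|apply (isQ_IZR 0)|apply (isQ_IZR 0)].
- now apply isQT_tmul.
Qed.

Lemma ev_tpow t n : ev th (tpow (IZR p) (IZR q) t n) = ev th t ^ n.
Proof. induction n; simpl. ring. rewrite ev_mul by auto. now rewrite IHn. Qed.

Lemma Qn_tpow t n : Qn (IZR p) th (tpow (IZR p) (IZR q) t n) = Qn (IZR p) th t ^ n.
Proof. induction n; simpl. ring. rewrite (Qn_mul (IZR p) (IZR q)) by auto. now rewrite IHn. Qed.

Lemma isQT_int u v w : isQT (IZR u, IZR v, IZR w).
Proof. unfold isQT; simpl; repeat split; apply isQ_IZR. Qed.

Lemma ev_int_mul u v w u2 v2 w2 : exists u3 v3 w3,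
  ev th (IZR u, IZR v, IZR w) * ev th (IZR u2, IZR v2, IZR w2) = ev th (IZR u3, IZR v3, IZR w3).
Proof.
rewrite <- (ev_mul (IZR p) (IZR q) th Hroot).
exists (u*u2 + q*(v*w2+w*v2))%Z, (u*v2+v*u2+p*(v*w2+w*v2)+q*w*w2)%Z, (u*w2+v*v2+w*u2+p*w*w2)%Z.
simpl. rewrite !plus_IZR, !mult_IZR, !plus_IZR, !mult_IZR. reflexivity.
Qed.

Variable d : nat.
Hypothesis Hd : (0 < d)%nat.

Lemma INRd_pos : 0 < INR d.
Proof. apply lt_0_INR. lia. Qed.

Lemma Good_mul e f x y : Good th d e x -> Good th d f y -> Good th d (e + f) (x * y).
Proof.
intros (u & v & w & ->) (u2 & v2 & w2 & ->).
destruct (ev_int_mul u v w u2 v2 w2) as (u3 & v3 & w3 & E).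
exists u3, v3, w3. rewrite <- E, pow_add. assert (H := INRd_pos).
field. split; apply pow_nonzero; lra.
Qed.

Lemma Good_lift e x : Good th d e x -> Good th d (S e) x.
Proof.
intros (u & v & w & ->). exists (Z.of_nat d * u)%Z, (Z.of_nat d * v)%Z, (Z.of_nat d * w)%Z.
simpl. rewrite !mult_IZR, <- INR_IZR_INZ. assert (H := INRd_pos).
field. split; [apply pow_nonzero; lra | lra].
Qed.

Lemma Good_le e f x : (e <= f)%nat -> Good th d e x -> Good th d f x.
Proof. intros H. induction H; auto. intro. apply Good_lift; auto. Qed.

Lemma Good_add e x y : Good th d e x -> Good th d e y -> Good th d e (x + y).
Proof.
intros (u & v & w & ->) (u2 & v2 & w2 & ->). exists (u+u2)%Z, (v+v2)%Z, (w+w2)%Z.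
simpl. rewrite !plus_IZR. assert (H := INRd_pos).
field. apply pow_nonzero; lra.
Qed.

Lemma Good_zmul e z x : Good th d e x -> Good th d e (IZR z * x).
Proof.
intros (u & v & w & ->). exists (z*u)%Z, (z*v)%Z, (z*w)%Z.
simpl. rewrite !mult_IZR. assert (H := INRd_pos).
field. apply pow_nonzero; lra.
Qed.

Lemma Good_opp e x : Good th d e x -> Good th d e (- x).
Proof. intro H. replace (- x) with (IZR (-1) * x) by (simpl; ring). now apply Good_zmul. Qed.

Lemma Good_one : Good th d 0 1.
Proof. exists 1%Z, 0%Z, 0%Z. simpl. field. Qed.

Lemma Good_pow mu : Good th d 1 mu -> forall k, Good th d k (mu ^ k).
Proof.
intros H k. induction k. apply Good_one.
simpl. replace (S k) with (1 + k)%nat by lia. now apply Good_mul.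
Qed.

Lemma Good_evalZ mu M : forall l j, (forall i, (i < length l)%nat -> Good th d M (mu ^ (j + i))) ->
  Good th d M (mu ^ j * evalZ l mu).
Proof.
induction l as [|z l IH]; intros j Hj; simpl.
- exists 0%Z, 0%Z, 0%Z. simpl. assert (H := INRd_pos). field. apply pow_nonzero; lra.
- replace (mu ^ j * (IZR z + mu * evalZ l mu)) with
    (IZR z * mu ^ j + mu ^ (S j) * evalZ l mu) by (simpl; ring).
  apply Good_add.
  + apply Good_zmul. replace j with (j + 0)%nat by lia. apply Hj. simpl; lia.
  + apply IH. intros i Hi. replace (S j + i)%nat with (j + S i)%nat by lia. apply Hj. simpl; lia.
Qed.

Lemma Good_allpow mu l : mu ^ length l + evalZ l mu = 0 -> Good th d 1 mu ->
  forall k, Good th d (length l) (mu ^ k).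
Proof.
intros Hl H1 k. induction k as [k IH] using (well_founded_induction lt_wf).
destruct (le_lt_dec k (length l)) as [Hk|Hk].
- apply (Good_le k); auto. now apply Good_pow.
- replace (mu ^ k) with (- (mu ^ (k - length l) * evalZ l mu)).
  + apply Good_opp. apply Good_evalZ. intros i Hi. apply IH. lia.
  + replace k with ((k - length l) + length l)%nat at 2 by lia. rewrite pow_add.
    replace (mu ^ length l) with (- evalZ l mu) by lra. ring.
Qed.
End Main.


Lemma IZR_ge1 z : 0 < IZR z -> 1 <= IZR z.
Proof. intro H. apply lt_0_IZR in H. apply IZR_le. lia. Qed.

Lemma NF_int p q u v w : exists z, NF (IZR p) (IZR q) (IZR u) (IZR v) (IZR w) = IZR z.
Proof.
exists (u*u*u + 2*u*u*w*p - u*v*v*p - 3*u*v*w*q + u*w*w*p*p + v*v*v*q - v*w*w*p*q + w*w*w*q*q)%Z.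
unfold NF. repeat (rewrite ?minus_IZR, ?plus_IZR, ?mult_IZR). simpl. ring.
Qed.

Lemma isQ_pow x n : isQ x -> isQ (x ^ n).
Proof. intro H. induction n; simpl. apply (isQ_IZR 1). now apply isQ_mul. Qed.

Section Norm.
Variables (p q : Z) (th : R).
Hypothesis Hroot : th ^ 3 - IZR p * th - IZR q = 0.
Hypothesis NRR : forall x, isQ x -> x ^ 3 - IZR p * x - IZR q <> 0.
Hypothesis HD : 0 < 3 * th ^ 2 - 4 * IZR p.
Variable d : nat.
Hypothesis Hd : (0 < d)%nat.

Lemma norm_ge1 mu tmu : isQT tmu -> ev th tmu = mu -> 0 < mu -> alg_int mu ->
  Good th d 1 mu -> 1 <= mu * Qn (IZR p) th tmu.
Proof.
intros HQ Hev Hmu [l Hl] HG.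
assert (HQn : 0 < Qn (IZR p) th tmu) by (apply (Qn_pos p q th); auto; lra).
set (Nm := mu * Qn (IZR p) th tmu).
assert (HNm : 0 < Nm) by (unfold Nm; nra).
destruct (Rlt_le_dec Nm 1) as [Hlt|]; auto. exfalso.
set (M := length l).
set (del := INR d ^ M).
assert (Hdel : 0 < del) by (unfold del; apply pow_lt; apply lt_0_INR; lia).
destruct (pow_lt_1_zero Nm ltac:(rewrite Rabs_pos_eq; lra) (/ del ^ 3))
  as [N HN]. apply Rinv_0_lt_compat. apply pow_lt; auto.
assert (HGk := Good_allpow p q th Hroot d Hd mu l Hl HG N).
destruct HGk as (u & v & w & Hk). fold M in Hk. fold del in Hk.
set (S := tscal (/ del) (IZR u, IZR v, IZR w)).
assert (HS : S = tpow (IZR p) (IZR q) tmu N).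
{ apply (uniqT p q th Hroot NRR).
  - apply isQT_tscal. apply isQ_inv. unfold del. apply isQ_pow, isQ_INR. apply isQT_int.
  - now apply isQT_tpow.
  - unfold S. rewrite ev_tscal, (ev_tpow p q th Hroot), Hev, Hk. field. lra. }
assert (E : Nm ^ N = NF (IZR p) (IZR q) (IZR u) (IZR v) (IZR w) / del ^ 3).
{ rewrite <- (Nm_int (IZR p) (IZR q) th Hroot).
  unfold Nm. rewrite Rpow_mult_distr, <- (Qn_tpow p q th Hroot), <- HS.
  unfold S. rewrite Qn_tscal. rewrite <- Hev at 1. rewrite <- (ev_tpow p q th Hroot), <- HS.
  unfold S. rewrite ev_tscal. field. lra. }
destruct (NF_int p q u v w) as [z Hz]. rewrite Hz in E.
assert (HNk : 0 < Nm ^ N) by (apply pow_lt; auto).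
assert (Hdel3 : 0 < del ^ 3) by (apply pow_lt; auto).
assert (Hz0 : 0 < IZR z).
{ rewrite E in HNk. unfold Rdiv in HNk.
  destruct (Rlt_le_dec 0 (IZR z)); auto.
  assert (0 < / del ^ 3) by (apply Rinv_0_lt_compat; auto). nra. }
assert (H1 := IZR_ge1 z Hz0).
assert (H2 := HN N (Nat.le_refl N)). rewrite Rabs_pos_eq in H2 by lra.
rewrite E in H2. unfold Rdiv in H2.
assert (0 < / del ^ 3) by (apply Rinv_0_lt_compat; auto). nra.
Qed.

Lemma norm_one lam tl tli : isQT tl -> isQT tli -> ev th tl = lam -> ev th tli = / lam ->
  0 < lam -> alg_int lam -> alg_int (/ lam) -> Good th d 1 lam -> Good th d 1 (/ lam) ->
  Qn (IZR p) th tl = / lam.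
Proof.
intros Q1 Q2 E1 E2 Hl A1 A2 G1 G2.
assert (N1 := norm_ge1 lam tl Q1 E1 Hl A1 G1).
assert (N2 := norm_ge1 (/ lam) tli Q2 E2 ltac:(apply Rinv_0_lt_compat; auto) A2 G2).
assert (HM : tmul (IZR p) (IZR q) tl tli = (1,0,0)).
{ apply (uniqT p q th Hroot NRR). now apply isQT_tmul. apply (isQT_int 1 0 0).
  rewrite (ev_mul (IZR p) (IZR q) th Hroot), E1, E2. simpl. field. lra. }
assert (HP : Qn (IZR p) th tl * Qn (IZR p) th tli = 1).
{ rewrite <- (Qn_mul (IZR p) (IZR q) th Hroot), HM. simpl. ring. }
assert (Hprod : (lam * Qn (IZR p) th tl) * (/ lam * Qn (IZR p) th tli) = 1).
{ transitivity ((lam * / lam) * (Qn (IZR p) th tl * Qn (IZR p) th tli)). ring.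
  rewrite HP, Rinv_r by lra. ring. }
assert (lam * Qn (IZR p) th tl = 1) by nra.
apply (Rmult_eq_reg_l lam). rewrite H, Rinv_r by lra. reflexivity. lra.
Qed.
End Norm.


Lemma CS (X W A B k : R) : 0 < k -> (X * A + W * B)^2 <= (X^2 + k * W^2) * (A^2 + B^2 / k).
Proof.
intro Hk.
assert (E : (X^2 + k * W^2) * (A^2 + B^2 / k) - (X * A + W * B)^2 = (X * B - k * W * A)^2 / k)
  by (field; lra).
assert (0 <= (X * B - k * W * A)^2 / k).
{ unfold Rdiv. apply Rmult_le_pos. apply pow2_ge_0. left; apply Rinv_0_lt_compat; auto. }
lra.
Qed.

Lemma trace_bound (P th a b c : R) : 0 < 3*th^2 - 4*P -> 0 < 3*th^2 - P ->
  exists Z, c * ((3*th^2 - 4*P) * (3*th^2 - P)) = ev th (a,b,c) * (3*th^2 - 4*P) + 2 * Z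
   /\ Z^2 <= Qn P th (a,b,c) * ((3*th^2 - 4*P) * (3*th^2 - P)).
Proof.
intros HD HE.
exists ((a - b*th/2 + c*(P - th*th/2)) * (2*P - 3*th^2/2) + (b - c*th) * (- 3*th*(3*th^2 - 4*P)/4)).
split. rewrite (trace_id P th a b c HD HE). field.
rewrite Qn_X.
replace ((3*th^2 - 4*P) * (3*th^2 - P)) with
  ((2*P - 3*th^2/2)^2 + (- 3*th*(3*th^2 - 4*P)/4)^2 / ((3*th^2 - 4*P)/4)) by (field; lra).
apply CS. lra.
Qed.

Lemma C1_bound (p : Z) (th : R) : 0 < 3*th^2 - 4*IZR p ->
  4 * (3*th^2 - IZR p) / (3*th^2 - 4*IZR p) <= ((1 + sqrt 2) * C1_const p th)^2.
Proof.
intro HD. set (D := 3*th^2 - 4*IZR p) in *.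
assert (s2 : sqrt 2 * sqrt 2 = 2) by (apply sqrt_sqrt; lra).
assert (s2p : 0 <= sqrt 2) by apply sqrt_pos.
assert (s2l : 1.4 <= sqrt 2) by nra.
assert (sD : sqrt D * sqrt D = D) by (apply sqrt_sqrt; lra).
assert (sDp : 0 < sqrt D) by (apply sqrt_lt_R0; auto).
set (K := C1_const p th).
assert (K1 : sqrt 2 <= K) by apply Rmax_l.
assert (K2 : sqrt 2 * Rabs th / sqrt D <= K) by apply Rmax_r.
assert (Kge2 : 2 <= K^2) by nra.
assert (HA : 0 <= sqrt 2 * Rabs th / sqrt D).
{ unfold Rdiv. apply Rmult_le_pos. apply Rmult_le_pos; auto. apply Rabs_pos.
  left; apply Rinv_0_lt_compat; auto. }
assert (Kw : 2 * (th^2 / D) <= K^2).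
{ replace (2 * (th^2 / D)) with ((sqrt 2 * Rabs th / sqrt D)^2).
  - apply pow_incr. auto.
  - replace ((sqrt 2 * Rabs th / sqrt D)^2) with ((sqrt 2)^2 * (Rabs th)^2 / (sqrt D)^2)
      by (field; lra).
    rewrite pow2_abs. replace (sqrt D ^ 2) with D by (simpl; lra).
    replace (sqrt 2 ^ 2) with 2 by (simpl; lra). field. lra. }
assert (Hl : 4 * (3*th^2 - IZR p) / D = 1 + 9 * (th^2 / D)) by (unfold D in *; field; lra).
rewrite Hl. rewrite Rpow_mult_distr.
assert (H58 : 5.8 <= (1 + sqrt 2)^2) by nra.
assert (0 <= ((1 + sqrt 2)^2 - 5.8) * K^2) by (apply Rmult_le_pos; lra).
lra.
Qed.

Lemma Rpower_u (lam : R) (n : nat) : 0 < lam ->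
  Rpower lam (3 * INR n / 2) = (sqrt lam ^ n) ^ 3.
Proof.
intro H. rewrite <- pow_mult, <- Rpower_pow by (apply sqrt_lt_R0; auto).
rewrite <- Rpower_sqrt, Rpower_mult by auto. f_equal.
rewrite mult_INR. simpl. field.
Qed.


Lemma arith_a u D E c Z : 0 < u -> 0 < D -> 0 < E ->
  c * (D * E) = u^2 * D + 2 * Z -> Z^2 <= / u^2 * (D * E) -> 4 * E / D < (u^3)^2 -> 0 < c.
Proof.
intros Hu HD HE H1 H2 H3.
destruct (Rlt_le_dec 0 c) as [|Hc]; auto. exfalso.
assert (HDE : 0 < D * E) by nra.
assert (HZ : 2 * Z <= - (u^2 * D)) by nra.
assert (Hu2 : 0 < u^2) by nra.
assert (HZ2 : (u^2 * D)^2 <= 4 * Z^2).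
{ assert (0 <= u^2 * D) by nra. nra. }
assert (HZ3 : Z^2 * u^2 <= D * E).
{ apply (Rmult_le_compat_r (u^2)) in H2; [|lra]. replace (/ u ^ 2 * (D * E) * u ^ 2) with (D * E) in H2 by (field; lra). lra. }
assert (H4 : (u^2*D)^2 * u^2 <= 4 * (D * E)) by nra.
assert (H5 : (u^3)^2 * D <= 4 * E).
{ replace ((u^2*D)^2 * u^2) with (((u^3)^2 * D) * D) in H4 by ring.
  apply (Rmult_le_reg_r D); auto. lra. }
assert (H6 : 4 * E / D * D = 4 * E) by (field; lra).
assert (H7 : 4 * E / D * D < (u^3)^2 * D) by (apply Rmult_lt_compat_r; auto).
lra.
Qed.

Lemma arith_b u s D E g Z : 0 < u -> 1 < s -> 0 < D -> 0 < E ->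
  g * (D * E) = u^2 * (s^2 - 1) * D + 2 * Z ->
  Z^2 <= / u^2 * (1 + / s)^2 * (D * E) ->
  4 * E / D < (u^3 * (s * (s - 1)))^2 -> 0 < g.
Proof.
intros Hu Hs HD HE H1 H2 H3.
destruct (Rlt_le_dec 0 g) as [|Hg]; auto. exfalso.
assert (HDE : 0 < D * E) by nra.
assert (Hs0 : 0 < s) by lra.
assert (Hu2 : 0 < u^2) by nra.
set (A := u^2 * (s^2 - 1) * D) in *.
assert (HA : 0 < A) by (unfold A; apply Rmult_lt_0_compat; [apply Rmult_lt_0_compat|]; nra).
assert (HZ : 2 * Z <= - A) by nra.
assert (HZ2 : A^2 <= 4 * Z^2) by nra.
assert (Hk : (1 + / s)^2 * s^2 = (s + 1)^2) by (field; lra).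
assert (HZ3 : Z^2 * u^2 * s^2 <= (s+1)^2 * (D * E)).
{ rewrite <- Hk.
  apply (Rmult_le_compat_r (u^2 * s^2)) in H2; [|nra].
  replace (/ u ^ 2 * (1 + / s) ^ 2 * (D * E) * (u ^ 2 * s ^ 2)) with
    ((1 + / s) ^ 2 * s ^ 2 * (D * E)) in H2 by (field; lra). lra. }
assert (H4 : A^2 * u^2 * s^2 <= 4 * ((s+1)^2 * (D * E))).
{ assert (0 <= u^2 * s^2) by nra. nra. }
assert (H5 : ((u^3 * (s * (s - 1)))^2 * D) * ((s+1)^2 * D) <= (4 * E) * ((s+1)^2 * D)).
{ unfold A in H4. replace (((u^3 * (s * (s - 1)))^2 * D) * ((s+1)^2 * D)) with
    ((u ^ 2 * (s ^ 2 - 1) * D) ^ 2 * u ^ 2 * s ^ 2) by ring. lra. }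
assert (Hp : 0 < (s+1)^2 * D) by nra.
assert (H6 : (u^3 * (s * (s - 1)))^2 * D <= 4 * E) by (apply (Rmult_le_reg_r ((s+1)^2 * D)); auto).
assert (H7 : 4 * E / D * D = 4 * E) by (field; lra).
assert (H8 : 4 * E / D * D < (u^3 * (s * (s - 1)))^2 * D) by (apply Rmult_lt_compat_r; auto).
lra.
Qed.


Lemma ev_eq th a b c : ev th (a,b,c) = a + b*th + c*th^2.
Proof. reflexivity. Qed.

Lemma sq_lt x y : 0 <= x -> x < y -> x^2 < y^2.
Proof. intros. nra. Qed.

Theorem main_aux
  (p q : Z) (NRRZ : forall n e : Z, e <> 0%Z -> (n*n*n - p*n*e*e - q*e*e*e)%Z <> 0%Z)
  (theta : R) (Hroot : theta ^ 3 - IZR p * theta - IZR q = 0)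
  (Huniq : forall x : R, x ^ 3 - IZR p * x - IZR q = 0 -> x = theta)
  (d : nat) (Hd : (0 < d)%nat)
  (HdOK : forall x : R, in_OK theta x ->
     exists u v w : Z, x = (IZR u + IZR v * theta + IZR w * theta ^ 2) / INR d)
  (lam : R) (Hunit : unit_OK theta lam) (Hlam : 1 < lam)
  (n : nat) (Hn : (1 <= n)%nat) :
  (forall a b c : Q,
     lam ^ n = Q2R a + Q2R b * theta + Q2R c * theta ^ 2 ->
     Rpower lam (3 * INR n / 2) > (1 + sqrt 2) * C1_const p theta ->
     (0 < c)%Q)
  /\
  (forall a b c a' b' c' : Q,
     lam ^ n = Q2R a + Q2R b * theta + Q2R c * theta ^ 2 ->
     lam ^ (n + 1) = Q2R a' + Q2R b' * theta + Q2R c' * theta ^ 2 ->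
     Rpower lam (3 * INR n / 2) >
       (1 + sqrt 2) * C1_const p theta / (sqrt lam * (sqrt lam - 1)) ->
     (c < c')%Q).
Proof.
assert (NRR := no_rat_root p q NRRZ).
assert (HD := D_pos p q theta Hroot Huniq NRR).
assert (HE : 0 < 3 * theta ^ 2 - IZR p) by (assert (H := pow2_ge_0 theta); lra).
destruct Hunit as [[HK1 HA1] [HK2 HA2]].
destruct HK1 as (a0 & b0 & c0 & E0).
destruct HK2 as (a1 & b1 & c1 & E1).
set (tl := (Q2R a0, Q2R b0, Q2R c0)).
set (tli := (Q2R a1, Q2R b1, Q2R c1)).
assert (Qtl : isQT tl) by (repeat split; apply isQ_Q2R).
assert (Qtli : isQT tli) by (repeat split; apply isQ_Q2R).
assert (Etl : ev theta tl = lam) by (unfold tl, ev; lra).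
assert (Etli : ev theta tli = / lam) by (unfold tli, ev; lra).
assert (G : forall x, in_OK theta x -> Good theta d 1 x).
{ intros x Hx. destruct (HdOK x Hx) as (u & v & w & Hx'). exists u, v, w.
  rewrite pow_1. exact Hx'. }
assert (Hl0 : 0 < lam) by lra.
assert (Hli0 : / lam <> 0) by (apply Rinv_neq_0_compat; lra).
assert (HQtl := norm_one p q theta Hroot NRR HD d Hd lam tl tli Qtl Qtli Etl Etli Hl0 HA1 HA2
  (G lam (conj (ex_intro _ a0 (ex_intro _ b0 (ex_intro _ c0 E0))) HA1))
  (G (/ lam) (conj (ex_intro _ a1 (ex_intro _ b1 (ex_intro _ c1 E1))) HA2))).
set (s := sqrt lam).
assert (Hs1 : 1 < s) by (unfold s; rewrite <- sqrt_1; apply sqrt_lt_1; lra).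
assert (Hss : s * s = lam) by (unfold s; apply sqrt_sqrt; lra).
set (u := s ^ n).
assert (Hu : 0 < u) by (unfold u; apply pow_lt; lra).
assert (Hlamn : lam ^ n = u ^ 2).
{ unfold u. rewrite <- Hss, Rpow_mult_distr. ring. }
assert (Hinvn : (/ lam) ^ n = / u ^ 2).
{ rewrite pow_inv, Hlamn. reflexivity. }
assert (Hpw : Rpower lam (3 * INR n / 2) = u ^ 3) by (unfold u, s; apply Rpower_u; lra).
assert (HC1 := C1_bound p theta HD).
assert (HC1p : 0 <= (1 + sqrt 2) * C1_const p theta).
{ apply Rmult_le_pos. assert (H := sqrt_pos 2); lra.
  apply Rle_trans with (sqrt 2). apply sqrt_pos. apply Rmax_l. }
assert (Hcoord : forall a b c : Q, lam ^ n = Q2R a + Q2R b * theta + Q2R c * theta ^ 2 ->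
  Qn (IZR p) theta (Q2R a, Q2R b, Q2R c) = / u ^ 2).
{ intros a b c Hev.
  assert (Ht : (Q2R a, Q2R b, Q2R c) = tpow (IZR p) (IZR q) tl n).
  { apply (uniqT p q theta Hroot NRR). repeat split; apply isQ_Q2R.
    now apply isQT_tpow. rewrite (ev_tpow p q theta Hroot), Etl. simpl. lra. }
  rewrite Ht, (Qn_tpow p q theta Hroot), HQtl. exact Hinvn. }
split.
- intros a b c Hev Hpow.
  apply Rlt_Qlt. replace (Q2R 0) with 0 by (unfold Q2R; simpl; ring).
  destruct (trace_bound (IZR p) theta (Q2R a) (Q2R b) (Q2R c) HD HE) as (Z & H1 & H2).
  rewrite (Hcoord a b c Hev) in H2.
  assert (Hev' : ev theta (Q2R a, Q2R b, Q2R c) = u ^ 2) by (simpl; lra).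
  rewrite Hev' in H1.
  apply (arith_a u (3 * theta ^ 2 - 4 * IZR p) (3 * theta ^ 2 - IZR p) (Q2R c) Z); auto.
  rewrite Hpw in Hpow.
  assert (((1 + sqrt 2) * C1_const p theta)^2 < (u^3)^2).
  { apply sq_lt; lra. }
  lra.
- intros a b c a' b' c' Hev Hev2 Hpow.
  apply Rlt_Qlt.
  set (t := (Q2R a, Q2R b, Q2R c)). set (t' := (Q2R a', Q2R b', Q2R c')).
  assert (Qt : isQT t) by (repeat split; apply isQ_Q2R).
  assert (Qt' : isQT t') by (repeat split; apply isQ_Q2R).
  assert (Evt : ev theta t = lam ^ n) by (unfold t; rewrite ev_eq; auto).
  assert (Evt' : ev theta t' = lam ^ (n + 1)) by (unfold t'; rewrite ev_eq; auto).
  set (tle := tsub tl (1,0,0)).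
  assert (Qtle : isQT tle) by (apply isQT_tsub; auto; apply (isQT_int 1 0 0)).
  assert (Htd : tsub t' t = tmul (IZR p) (IZR q) t tle).
  { apply (uniqT p q theta Hroot NRR). apply isQT_tsub; auto. apply isQT_tmul; auto.
    rewrite (ev_mul (IZR p) (IZR q) theta Hroot), !ev_tsub. unfold tle. rewrite ev_tsub, Etl.
    rewrite Evt, Evt', ev_eq, pow_add, pow_1. ring. }
  assert (HQtle : Qn (IZR p) theta tle <= (1 + / s) ^ 2).
  { unfold tle, tl. simpl tsub. rewrite !Qn_X. unfold tl in HQtl. rewrite Qn_X in HQtl.
    set (X := Q2R a0 - Q2R b0 * theta / 2 + Q2R c0 * (IZR p - theta * theta / 2)) in *.
    set (W := Q2R b0 - Q2R c0 * theta) in *.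
    replace (Q2R a0 - 1 - (Q2R b0 - 0) * theta / 2 + (Q2R c0 - 0) * (IZR p - theta * theta / 2))
      with (X - 1) by (unfold X; field).
    replace (Q2R b0 - 0 - (Q2R c0 - 0) * theta) with W by (unfold W; field).
    assert (HW : 0 <= (3 * theta ^ 2 - 4 * IZR p) / 4 * W ^ 2).
    { apply Rmult_le_pos; [lra | apply pow2_ge_0]. }
    assert (HX2 : X ^ 2 <= / s ^ 2).
    { replace (/ s ^ 2) with (/ lam) by (rewrite <- Hss; simpl; field; lra). lra. }
    assert (Hsi : 0 < / s) by (apply Rinv_0_lt_compat; lra).
    assert (HX : - / s <= X).
    { destruct (Rle_dec (- / s) X) as [|Hn']; auto. exfalso.
      assert (/ s ^ 2 = (/ s) ^ 2) by (rewrite pow_inv; reflexivity). nra. }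
    replace ((X - 1) ^ 2) with (X ^ 2 - 2 * X + 1) by ring.
    replace ((1 + / s) ^ 2) with ((/ s) ^ 2 + 2 * / s + 1) by ring.
    assert (/ s ^ 2 = (/ s) ^ 2) by (rewrite pow_inv; reflexivity).
    assert (/ lam = / s ^ 2) by (rewrite <- Hss; simpl; field; lra). lra. }
  assert (HQtd : Qn (IZR p) theta (tsub t' t) <= / u ^ 2 * (1 + / s) ^ 2).
  { rewrite Htd, (Qn_mul (IZR p) (IZR q) theta Hroot).
    unfold t. rewrite (Hcoord a b c Hev).
    apply Rmult_le_compat_l; auto. left; apply Rinv_0_lt_compat; nra. }
  assert (Hevd : ev theta (tsub t' t) = u ^ 2 * (s ^ 2 - 1)).
  { rewrite Htd, (ev_mul (IZR p) (IZR q) theta Hroot), Evt. unfold tle.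
    rewrite ev_tsub, Etl, ev_eq, Hlamn, <- Hss. ring. }
  unfold t, t' in HQtd, Hevd. simpl tsub in HQtd, Hevd.
  destruct (trace_bound (IZR p) theta (Q2R a' - Q2R a) (Q2R b' - Q2R b) (Q2R c' - Q2R c) HD HE)
    as (Z & H1 & H2).
  rewrite Hevd in H1.
  assert (0 < Q2R c' - Q2R c).
  { apply (arith_b u s (3 * theta ^ 2 - 4 * IZR p) (3 * theta ^ 2 - IZR p) _ Z); auto.
    - apply Rle_trans with (1 := H2). apply Rmult_le_compat_r. nra. exact HQtd.
    - rewrite Hpw in Hpow. fold s in Hpow.
      assert (Hss1 : 0 < s * (s - 1)) by nra.
      assert (HH : (1 + sqrt 2) * C1_const p theta < u ^ 3 * (s * (s - 1))).
      { apply (Rmult_lt_compat_r (s * (s - 1))) in Hpow; auto.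
        unfold Rdiv in Hpow. rewrite Rmult_assoc, Rinv_l in Hpow by lra. lra. }
      assert (((1 + sqrt 2) * C1_const p theta)^2 < (u ^ 3 * (s * (s - 1)))^2).
      { apply sq_lt; lra. }
      lra. }
  lra.
Qed.

Theorem mainTheorem9
  (p q : Z) (Hirr : cubic_irreducible p q)
  (theta : R) (Hroot : theta ^ 3 - IZR p * theta - IZR q = 0)
  (Huniq : forall x : R, x ^ 3 - IZR p * x - IZR q = 0 -> x = theta)
  (d : nat) (Hd : (0 < d)%nat)
  (HdOK : forall x : R, in_OK theta x ->
     exists u v w : Z, x = (IZR u + IZR v * theta + IZR w * theta ^ 2) / INR d)
  (lam : R) (Hunit : unit_OK theta lam) (Hlam : 1 < lam)
  (n : nat) (Hn : (1 <= n)%nat) :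
  (forall a b c : Q,
     lam ^ n = Q2R a + Q2R b * theta + Q2R c * theta ^ 2 ->
     Rpower lam (3 * INR n / 2) > (1 + sqrt 2) * C1_const p theta ->
     (0 < c)%Q)
  /\
  (forall a b c a' b' c' : Q,
     lam ^ n = Q2R a + Q2R b * theta + Q2R c * theta ^ 2 ->
     lam ^ (n + 1) = Q2R a' + Q2R b' * theta + Q2R c' * theta ^ 2 ->
     Rpower lam (3 * INR n / 2) >
       (1 + sqrt 2) * C1_const p theta / (sqrt lam * (sqrt lam - 1)) ->
     (c < c')%Q).
Proof.
exact (main_aux p q (MC.no_rat_root_mc p q Hirr) theta Hroot Huniq d Hd HdOK lam Hunit Hlam n Hn).
Qed.
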